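(* Let $x=\{x_n\}_{n=1}^\infty$ be a complex sequence with $x_n\neq0$ for all $n$ and $\sum_{k=1}^\infty|x_kx_{k+1}|<\infty$. Then $F_n:=\mathfrak{F}\big(\{x_k\}_{k=n}^\infty\big)$, $n\in\mathbb{N}$, is the unique solution of the second order difference equation \[ F_n-F_{n+1}+x_nx_{n+1}F_{n+2}=0,\quad n\in\mathbb{N}, \] satisfying $\lim_{n\to\infty}F_n=1$.
   Context: For a complex sequence $x=\{x_k\}_{k=N}^{\infty}$ with $\sum_{k\ge N}|x_kx_{k+1}|<\infty$, define \[ \mathfrak{F}(x)=1+\sum_{m=1}^\infty(-1)^m\sum_{k_1=N}^\infty\ \sum_{k_2=k_1+2}^\infty\cdots\sum_{k_m=k_{m-1}+2}^\infty x_{k_1}x_{k_1+1}x_{k_2}x_{k_2+1}\cdots x_{k_m}x_{k_m+1}. \] *)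

(* Defs.v *)
From HB Require Import structures.
From mathcomp Require Import all_boot all_order all_algebra.
From mathcomp Require Import all_classical all_reals all_analysis.
From mathcomp Require Import complex.
Set Implicit Arguments. Unset Strict Implicit. Unset Printing Implicit Defensive.
Import Order.TTheory GRing.Theory Num.Theory.
Import numFieldNormedType.Exports.
Local Open Scope ring_scope.

(* The standard (metric) topology / normed-module structure of the complex
   numbers R[i], i.e. the one induced by the modulus |z|; this is the
   library's own numFieldType-as-normed-module structure (R[i])^o, made
   canonical on R[i]. *)
HB.instance Definition _ (R : rcfType) := NormedModule.copy R[i] (R[i])^o.

(* A complex sequence {x_k}_{k>=N} is represented by x : nat -> R[i] together
   with the starting index N (only the values x_k, k >= N, are used). *)

(* nestedF x m N p
     = sum_{k_1>=N} sum_{k_2>=k_1+2} ... sum_{k_m>=k_{m-1}+2}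
          p * x_{k_1} x_{k_1+1} ... x_{k_m} x_{k_m+1},
   written literally as m nested series (each an infinite series
   \big[+%R/0]_(a <= k <oo) := limn of the partial sums). *)
Fixpoint nestedF (R : realType) (x : nat -> R[i]) (m N : nat) (p : R[i])
  : R[i] :=
  match m with
  | 0 => p
  | m'.+1 => \big[+%R/0]_(N <= k <oo) nestedF x m' k.+2 (p * (x k * x k.+1))
  end.

(* frakF x N = \mathfrak{F}({x_k}_{k=N}^\infty)
   = 1 + sum_{m>=1} (-1)^m sum_{k_1>=N} ... x_{k_1}x_{k_1+1}...x_{k_m}x_{k_m+1} *)
Definition frakF (R : realType) (x : nat -> R[i]) (N : nat) : R[i] :=
  1 + \big[+%R/0]_(1 <= m <oo) ((-1) ^+ m * nestedF x m N 1).

(* Main.v *)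
Require Import Defs.
From HB Require Import structures.
From mathcomp Require Import all_boot all_order all_algebra.
From mathcomp Require Import all_classical all_reals all_analysis.
From mathcomp Require Import complex.
Import Order.TTheory GRing.Theory Num.Theory.
Import numFieldNormedType.Exports.
Local Open Scope classical_set_scope.
Local Open Scope ring_scope.
From mathcomp Require Import lra.
From mathcomp Require Import zify ring.

Section H.
Context {R : realType}.
Local Notation nc := (@ComplexField.Normc.normc R).
Local Notation cRe := (@complex.Re R).
Local Notation cIm := (@complex.Im R).

Lemma nc_ge0 (z : R[i]) : 0 <= nc z.
Proof. by case: z => a b /=; exact: sqrtr_ge0. Qed.

Lemma nc_Re (z : R[i]) : `|cRe z| <= nc z :> R.
Proof. by case: z => a b /=; rewrite -sqrtr_sqr ler_wsqrtr // lerDl sqr_ge0. Qed.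

Lemma nc_Im (z : R[i]) : `|cIm z| <= nc z :> R.
Proof. by case: z => a b /=; rewrite -sqrtr_sqr ler_wsqrtr // lerDr sqr_ge0. Qed.

Lemma nc_le (z : R[i]) : nc z <= `|cRe z| + `|cIm z|.
Proof.
case: z => a b /=.
rewrite -[X in _ <= X]ger0_norm ?addr_ge0 // -sqrtr_sqr ler_wsqrtr //.
rewrite sqrrD !real_normK ?num_real // addrAC lerDl.
by rewrite mulrn_wge0 // mulr_ge0.
Qed.

Lemma normE (z : R[i]) : `|z| = (nc z)%:C%C.
Proof. by case: z. Qed.

Lemma one_C : (1 : R[i]) = ((1 : R) +i* 0)%C.
Proof. by []. Qed.

Lemma gt0C (e : R[i]) : 0 < e -> e = ((cRe e)%:C)%C /\ 0 < cRe e.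
Proof.
case: e => a b; rewrite ltcE /= => /andP[/eqP -> ha]; split => //.
Qed.

Lemma cvgC (u : nat -> R[i]) (r s : R) :
  (fun n => cRe (u n)) @ \oo --> r -> (fun n => cIm (u n)) @ \oo --> s ->
  u @ \oo --> (r +i* s)%C.
Proof.
move=> /cvgrPdist_lt hr /cvgrPdist_lt hs; apply/cvgrPdist_lt => e /gt0C [-> e0].
have e2 : 0 < cRe e / 2 by rewrite divr_gt0.
move: (hr _ e2) (hs _ e2) => hr' hs'.
near=> n.
rewrite normE ltcR (le_lt_trans (nc_le _)) //.
have -> : cRe ((r +i* s)%C - u n) = r - cRe (u n) by case: (u n).
have -> : cIm ((r +i* s)%C - u n) = s - cIm (u n) by case: (u n).
rewrite [ltRHS](splitr (cRe e)) ltrD //.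
  by near: n.
by near: n.
Unshelve. all: by end_near. Qed.
End H.

Section H2.
Context {R : realType}.
Local Notation nc := (@ComplexField.Normc.normc R).
Local Notation cRe := (@complex.Re R).
Local Notation cIm := (@complex.Im R).

Lemma nc_D (x y : R[i]) : nc (x + y) <= nc x + nc y.
Proof. by rewrite -lecR rmorphD /= -!normE; exact: ler_normD. Qed.

Lemma nc_sum (N n : nat) (u : nat -> R[i]) :
  nc (\sum_(N <= k < n) u k) <= \sum_(N <= k < n) nc (u k).
Proof.
elim/big_rec2: _ => [|i y1 y2 _ h]; first by rewrite (@ComplexField.Normc.normc0 R).
by rewrite (le_trans (nc_D _ _)) // lerD2l.
Qed.

Lemma Re_sum (N n : nat) (u : nat -> R[i]) :
  cRe (\sum_(N <= k < n) u k) = \sum_(N <= k < n) cRe (u k).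
Proof.
by elim/big_rec2: _ => [//|i y1 y2 _ <-]; case: (u i); case: y2.
Qed.

Lemma Im_sum (N n : nat) (u : nat -> R[i]) :
  cIm (\sum_(N <= k < n) u k) = \sum_(N <= k < n) cIm (u k).
Proof.
by elim/big_rec2: _ => [//|i y1 y2 _ <-]; case: (u i); case: y2.
Qed.

Lemma psum_nd (f : nat -> R) N : (forall k, (N <= k)%N -> 0 <= f k) ->
  nondecreasing_seq (fun n => \sum_(N <= k < n) f k).
Proof.
move=> f0 m n mn /=.
case: (leqP N m) => Nm.
  rewrite (big_cat_nat Nm mn) /= lerDl big_nat_cond sumr_ge0 // => i /andP[/andP[hi _] _].
  by apply: f0; rewrite (leq_trans Nm).
rewrite big_geq ?(ltnW Nm) //.
by rewrite big_nat_cond sumr_ge0 // => i /andP[/andP[hi _] _]; apply: f0.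
Qed.
End H2.

Section H3.
Context {R : realType}.
Local Notation nc := (@ComplexField.Normc.normc R).
Local Notation cRe := (@complex.Re R).
Local Notation cIm := (@complex.Im R).

Lemma bnd_cvg (f : nat -> R) N L : (forall k, (N <= k)%N -> 0 <= f k) ->
  (forall n, \sum_(N <= k < n) f k <= L) -> cvgn (fun n => \sum_(N <= k < n) f k).
Proof.
move=> f0 hL; apply: nondecreasing_is_cvgn; first exact: psum_nd.
by exists L => _ [n _ <-].
Qed.

Lemma abs_series (u : nat -> R[i]) (b : nat -> R) (N : nat) (L : R) :
  (forall k, (N <= k)%N -> nc (u k) <= b k) ->
  (forall n, \sum_(N <= k < n) b k <= L) ->
  (fun n => \sum_(N <= k < n) u k) @ \oo --> limn (fun n => \sum_(N <= k < n) u k)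
  /\ nc (limn (fun n => \sum_(N <= k < n) u k)) <= L.
Proof.
move=> hub hL.
have b0 k : (N <= k)%N -> 0 <= b k by move=> hk; exact: le_trans (nc_ge0 _) (hub k hk).
have L0 : 0 <= L by have := hL 0%N; rewrite big_geq.
have bcvg : cvgn (fun n => \sum_(N <= k < n) b k) by exact: (bnd_cvg _ _ _ b0 hL).
have part (g : R[i] -> R) : (forall z, `|g z| <= nc z) ->
    cvgn (fun n => \sum_(N <= k < n) g (u k)).
  move=> hg.
  have c0 k : (N <= k)%N -> 0 <= g (u k) + b k.
    move=> hk; have := le_trans (hg (u k)) (hub k hk).
    rewrite ler_norml => /andP[h1 _]; lra.
  have cb n : \sum_(N <= k < n) (g (u k) + b k) <= L + L.
    rewrite big_split /=; apply: lerD (hL n); apply: le_trans (hL n).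
    apply: ler_sum_nat => k /andP[hk _].
    exact: le_trans (ler_norm _) (le_trans (hg _) (hub k hk)).
  rewrite (_ : (fun n => _) = (fun n => \sum_(N <= k < n) (g (u k) + b k) - \sum_(N <= k < n) b k)).
    exact: is_cvgB (bnd_cvg _ _ _ c0 cb) bcvg.
  by apply/funext => n; rewrite big_split /= addrK.
have cr := part cRe (@nc_Re R); have ci := part cIm (@nc_Im R).
set r := limn _ in cr; set s := limn _ in ci.
have hu : (fun n => \sum_(N <= k < n) u k) @ \oo --> (r +i* s)%C.
  apply: cvgC.
    by rewrite (_ : (fun n => _) = (fun n => \sum_(N <= k < n) cRe (u k))) //;
      apply/funext => n; rewrite Re_sum.
  by rewrite (_ : (fun n => _) = (fun n => \sum_(N <= k < n) cIm (u k))) //;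
    apply/funext => n; rewrite Im_sum.
rewrite (cvg_lim _ hu) //; split => //.
have hb n : (\sum_(N <= k < n) cRe (u k)) ^+ 2 + (\sum_(N <= k < n) cIm (u k)) ^+ 2 <= L ^+ 2.
  have h1 : nc (\sum_(N <= k < n) u k) <= L.
    apply: le_trans (nc_sum _ _ _) (le_trans _ (hL n)).
    by apply: ler_sum_nat => k /andP[hk _]; exact: hub.
  move: h1; rewrite -Re_sum -Im_sum; case: (\sum_(N <= k < n) u k) => a c /= h1.
  rewrite -(@sqr_sqrtr _ (a ^+ 2 + c ^+ 2)) ?addr_ge0 ?sqr_ge0 //.
  have := sqrtr_ge0 (a ^+ 2 + c ^+ 2); nra.
have hlim : r ^+ 2 + s ^+ 2 <= L ^+ 2.
  have hc : (fun n => (\sum_(N <= k < n) cRe (u k)) ^+ 2 + (\sum_(N <= k < n) cIm (u k)) ^+ 2) @ \oo --> r ^+ 2 + s ^+ 2.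
    by rewrite !expr2; apply: cvgD; apply: cvgM.
  apply: (@cvgr_to_le _ \oo _ _ _ _ _ hc); apply: nearW => n; exact: hb n.
rewrite /= -(ger0_norm L0) -sqrtr_sqr ler_wsqrtr //.
Qed.
End H3.

Section H4.
Context {R : realType}.
Local Notation nc := (@ComplexField.Normc.normc R).
Local Notation cRe := (@complex.Re R).
Local Notation cIm := (@complex.Im R).

Lemma sum_start_le (f : nat -> R) N M n : (forall k, (N <= k)%N -> 0 <= f k) ->
  (N <= M)%N -> \sum_(M <= k < n) f k <= \sum_(N <= k < n) f k.
Proof.
move=> f0 NM; case: (leqP M n) => Mn.
  rewrite (big_cat_nat NM Mn) /= lerDr big_nat_cond sumr_ge0 // => i /andP[/andP[hi _] _].
  exact: f0.
rewrite big_geq ?(ltnW Mn) // big_nat_cond sumr_ge0 // => i /andP[/andP[hi _] _].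
exact: f0.
Qed.

Variable x : nat -> R[i].
Local Notation a k := (x k * x k.+1).
Local Notation bb k := (nc (x k * x k.+1)).
Variable L : R.
Hypothesis hbnd : forall n, \sum_(1 <= k < n) bb k <= L.

Definition B N := limn (fun n => \sum_(N <= k < n) bb k).

Lemma bb0 k : 0 <= bb k. Proof. exact: nc_ge0. Qed.

Lemma psumN N n : (1 <= N)%N -> \sum_(N <= k < n) bb k <= L.
Proof. move=> hN; apply: le_trans (hbnd n); apply: sum_start_le => // k _; exact: bb0. Qed.

Lemma Bcvg N : (1 <= N)%N -> cvgn (fun n => \sum_(N <= k < n) bb k).
Proof. move=> hN; apply: (bnd_cvg _ _ L) => [k _|n]; [exact: bb0|exact: psumN]. Qed.

Lemma Ble N n : (1 <= N)%N -> \sum_(N <= k < n) bb k <= B N.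
Proof.
move=> hN; rewrite /B; apply: (@nondecreasing_cvgn_le R _ _ (Bcvg N hN)).
by apply: psum_nd => k _; exact: bb0.
Qed.

Lemma B0 N : (1 <= N)%N -> 0 <= B N.
Proof. by move=> hN; have := Ble N 0 hN; rewrite big_geq. Qed.

Lemma Bmono N M : (1 <= N)%N -> (N <= M)%N -> B M <= B N.
Proof.
move=> hN NM; apply: limr_le; first exact: Bcvg M (leq_trans hN NM).
apply: nearW => n; apply: le_trans (Ble N n hN).
by apply: sum_start_le => // k _; exact: bb0.
Qed.

Lemma Bsplit N : (1 <= N)%N -> B N = B 1 - \sum_(1 <= k < N) bb k.
Proof.
move=> hN; apply: cvg_lim; first exact: norm_hausdorff.
have h1 := Bcvg 1 (leqnn 1).
have H : (fun n => \sum_(1 <= k < n) bb k - \sum_(1 <= k < N) bb k) @ \oo --> B 1 - \sum_(1 <= k < N) bb k.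
  exact: cvgB h1 (cvg_cst _).
have E : {near \oo, (fun n => \sum_(1 <= k < n) bb k - \sum_(1 <= k < N) bb k) =1
   (fun n => \sum_(N <= k < n) bb k)}.
  near=> n.
  have Nn : (N <= n)%N by near: n; exact: nbhs_infty_ge.
  by rewrite /= (big_cat_nat hN Nn) /= addrC addrK.
exact: cvg_trans (near_eq_cvg E) H.
Unshelve. all: by end_near. Qed.

Lemma Bto0 : B @ \oo --> (0 : R).
Proof.
have h1 := Bcvg 1 (leqnn 1).
rewrite -(subrr (B 1)).
have H : (fun N => B 1 - \sum_(1 <= k < N) bb k) @ \oo --> B 1 - B 1.
  exact: cvgB (cvg_cst _) h1.
have E : {near \oo, (fun N => B 1 - \sum_(1 <= k < N) bb k) =1 B}.
  near=> N.
  have hN : (1 <= N)%N by near: N; exact: nbhs_infty_ge.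
  by rewrite /= (Bsplit N hN).
exact: cvg_trans (near_eq_cvg E) H.
Unshelve. all: by end_near. Qed.

End H4.

Section H5.
Context {R : realType}.
Local Notation nc := (@ComplexField.Normc.normc R).
Variable x : nat -> R[i].
Local Notation a k := (x k * x k.+1).
Local Notation bb k := (nc (x k * x k.+1)).
Variable L : R.
Hypothesis hbnd : forall n, \sum_(1 <= k < n) bb k <= L.
Local Notation S m N := (nestedF x m N 1).
Local Notation BB := (B x).
Let B0' := @B0 R x L hbnd.
Let Bmono' := @Bmono R x L hbnd.
Let Ble' := @Ble R x L hbnd.

Definition Lprop m := forall N, (1 <= N)%N ->
  (forall p, nestedF x m N p = p * S m N) /\ nc (S m N) <= BB N ^+ m.

Lemma step m : Lprop m -> forall N, (1 <= N)%N ->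
  [/\ (forall p, nestedF x m.+1 N p = p * S m.+1 N), nc (S m.+1 N) <= BB N ^+ m.+1
    & (fun n => \sum_(N <= k < n) (a k * S m k.+2)) @ \oo --> S m.+1 N].
Proof.
move=> IH N hN.
have eqt p k : nestedF x m k.+2 (p * a k) = p * (a k * S m k.+2).
  by rewrite (IH k.+2 isT).1 -mulrA.
have hub k : (N <= k)%N -> nc (a k * S m k.+2) <= bb k * BB N ^+ m.
  move=> hk; rewrite ComplexField.Normc.normcM ler_wpM2l ?nc_ge0 //.
  apply: le_trans (IH k.+2 isT).2 _.
  apply: lerXn2r; rewrite ?nnegrE; [exact: B0'|exact: B0'|].
  apply: Bmono' => //; lia.
have hL n : \sum_(N <= k < n) bb k * BB N ^+ m <= BB N ^+ m.+1.
  rewrite -big_distrl /= exprS ler_wpM2r ?exprn_ge0 ?B0' //.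
  exact: Ble'.
have [hc hn] := abs_series _ _ _ _ hub hL.
set lg := limn _ in hc hn.
have key p : nestedF x m.+1 N p = p * lg.
  rewrite /= (_ : (fun n => _) = (fun n => p * \sum_(N <= k < n) (a k * S m k.+2))).
    apply: cvg_lim; first exact: norm_hausdorff.
    exact: cvgM (cvg_cst p) hc.
  by apply/funext => n; rewrite big_distrr /=; apply: eq_bigr => k _; exact: eqt.
have eS : S m.+1 N = lg by rewrite key mul1r.
by split => [p||]; rewrite ?eS //; exact: key.
Qed.

Lemma L1 m : Lprop m.
Proof.
elim: m => [|m IH] N hN.
  split => [p|]; first by rewrite /= mulr1.
  by rewrite /= expr0 /ComplexField.Normc.normc /= expr0n /= expr1n addr0 sqrtr1.
by have [? ? _] := step _ IH _ hN.
Qed.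

Lemma Sser m N : (1 <= N)%N ->
  (fun n => \sum_(N <= k < n) (a k * S m k.+2)) @ \oo --> S m.+1 N.
Proof. by move=> hN; have [_ _ ?] := step _ (L1 m) _ hN. Qed.

Lemma Srec m N : (1 <= N)%N -> S m.+1 N = a N * S m N.+2 + S m.+1 N.+1.
Proof.
move=> hN.
have h1 := Sser m N hN.
have h2 := Sser m N.+1 isT.
have H : (fun n => a N * S m N.+2 + \sum_(N.+1 <= k < n) (a k * S m k.+2)) @ \oo -->
    a N * S m N.+2 + S m.+1 N.+1.
  exact: cvgD (cvg_cst _) h2.
have E : {near \oo, (fun n => a N * S m N.+2 + \sum_(N.+1 <= k < n) (a k * S m k.+2)) =1
    (fun n => \sum_(N <= k < n) (a k * S m k.+2))}.
  near=> n.
  have Nn : (N < n)%N by near: n; exact: nbhs_infty_gt.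
  by rewrite /= (big_ltn Nn).
have h3 : (fun n => \sum_(N <= k < n) (a k * S m k.+2)) @ \oo --> a N * S m N.+2 + S m.+1 N.+1.
  exact: cvg_trans (near_eq_cvg E) H.
exact: (cvg_unique _ h1 h3).
Unshelve. all: by end_near. Qed.

End H5.

Section H6.
Context {R : realType}.
Local Notation nc := (@ComplexField.Normc.normc R).

Lemma shift1 (u : nat -> R[i]) (l : R[i]) : u @ \oo --> l -> (fun n => u n.+1) @ \oo --> l.
Proof. by rewrite -(cvg_shiftS u). Qed.

Lemma unshift1 (u : nat -> R[i]) (l : R[i]) : (fun n => u n.+1) @ \oo --> l -> u @ \oo --> l.
Proof. by rewrite -(cvg_shiftS u). Qed.

Lemma nc_sign m : nc ((-1) ^+ m) = 1.
Proof.
have : ((nc ((-1) ^+ m))%:C = 1 :> R[i])%C by rewrite -normE normrX normrN1 expr1n.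
by case.
Qed.

Lemma geo (q : R) n : 0 <= q -> q <= 1 / 2 -> \sum_(1 <= m < n) q ^+ m <= 2 * q.
Proof.
move=> q0 q2.
suff H : forall n, \sum_(1 <= m < n.+1) q ^+ m <= 2 * q - 2 * q ^+ n.+1.
  case: n => [|n]; first by rewrite big_geq // mulr_ge0.
  apply: le_trans (H n) _; rewrite lerBlDr lerDl mulr_ge0 // exprn_ge0 //.
clear n; elim => [|n IH]; first by rewrite big_geq // expr1 subrr.
rewrite big_nat_recr //=.
apply: le_trans (lerD IH (lexx _)) _.
have h0 : 0 <= q ^+ n.+1 by exact: exprn_ge0.
rewrite [q ^+ n.+2]exprS; nra.
Qed.

Variable x : nat -> R[i].
Local Notation a k := (x k * x k.+1).
Local Notation bb k := (nc (x k * x k.+1)).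
Variable L : R.
Hypothesis hbnd : forall n, \sum_(1 <= k < n) bb k <= L.
Local Notation S m N := (nestedF x m N 1).
Local Notation BB := (B x).
Local Notation P N n := (\sum_(1 <= m < n) (-1) ^+ m * S m N).
Local Notation Q N n := (\sum_(0 <= m < n) (-1) ^+ m * S m N).

Lemma Qs N n : Q N n.+1 = Q N n + (-1) ^+ n * S n N.
Proof. by rewrite big_nat_recr. Qed.

Lemma Qrec N n : (1 <= N)%N -> Q N n.+1 = Q N.+1 n.+1 - a N * Q N.+2 n.
Proof.
move=> hN; elim: n => [|n IH].
  by rewrite !big_nat1 big_geq //= expr0 !mul1r mulr0 subr0.
rewrite (Qs N n.+1) (Qs N.+1 n.+1) (Qs N.+2 n) IH (@Srec R x L hbnd n N hN) exprS.
ring.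
Qed.

Lemma PQ N n : Q N n.+1 = 1 + P N n.+1.
Proof. by rewrite big_ltn //= expr0 mul1r. Qed.

Lemma Prec N n : (1 <= N)%N -> P N n.+2 = P N.+1 n.+2 - a N * (1 + P N.+2 n.+1).
Proof.
move=> hN; have := Qrec N n.+1 hN; rewrite !PQ => h.
by apply: (addrI 1); rewrite h addrA.
Qed.

End H6.

Section H7.
Context {R : realType}.
Local Notation nc := (@ComplexField.Normc.normc R).

Lemma dom (u : nat -> R[i]) (c : R[i]) (f : nat -> R) : f @ \oo --> (0 : R) ->
  (\forall N \near \oo, nc (u N - c) <= f N) -> u @ \oo --> c.
Proof.
move=> /cvgrPdist_lt hf hb; apply/cvgrPdist_lt => e /gt0C [-> e0].
have := hf _ e0; apply: filterS2 hb => N h1 h2.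
rewrite normE ltcR -opprB.
have -> : nc (- (u N - c)) = nc (u N - c) by exact: normcN.
apply: le_lt_trans h1 _; apply: le_lt_trans (ler_norm _) _.
by rewrite -normrN -sub0r.
Qed.

Variable x : nat -> R[i].
Local Notation a k := (x k * x k.+1).
Local Notation bb k := (nc (x k * x k.+1)).
Variable L : R.
Hypothesis hbnd : forall n, \sum_(1 <= k < n) bb k <= L.
Local Notation S m N := (nestedF x m N 1).
Local Notation BB := (B x).
Local Notation P N n := (\sum_(1 <= m < n) (-1) ^+ m * S m N).

Lemma Pgeo N : (1 <= N)%N -> BB N <= 1 / 2 ->
  cvgn (fun n => P N n) /\ nc (limn (fun n => P N n)) <= 2 * BB N.
Proof.
move=> hN hB.
apply: (abs_series _ (fun m => BB N ^+ m) 1 (2 * BB N)).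
  move=> m _ /=; rewrite ComplexField.Normc.normcM nc_sign mul1r.
  exact: (@L1 R x L hbnd m N hN).2.
by move=> n; apply: geo => //; exact: (@B0 R x L hbnd N hN).
Qed.

Lemma Plim N : (1 <= N)%N -> cvgn (fun n => P N.+1 n) -> cvgn (fun n => P N.+2 n) ->
  (fun n => P N n) @ \oo -->
    limn (fun n => P N.+1 n) - a N * (1 + limn (fun n => P N.+2 n)).
Proof.
move=> hN c1 c2.
apply: (unshift1 (fun n => P N n)); apply: (unshift1 (fun n => P N n.+1)) => /=.
rewrite (_ : (fun n => P N n.+2) = (fun n => P N.+1 n.+2 - a N * (1 + P N.+2 n.+1))); last first.
  by apply/funext => n; rewrite (@Prec R x L hbnd N n hN).
have h1 : (fun n => P N.+1 n.+2) @ \oo --> limn (fun n => P N.+1 n).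
  exact: (shift1 (fun n => P N.+1 n.+1) _ (shift1 (fun n => P N.+1 n) _ c1)).
have h2 : (fun n => P N.+2 n.+1) @ \oo --> limn (fun n => P N.+2 n).
  exact: (shift1 (fun n => P N.+2 n) _ c2).
have h3 : (fun n => a N * (1 + P N.+2 n.+1)) @ \oo --> a N * (1 + limn (fun n => P N.+2 n)).
  exact: cvgM (cvg_cst _) (cvgD (cvg_cst _) h2).
exact: cvgB h1 h3.
Qed.

Lemma Bev : \forall N \near \oo, BB N <= 1 / 2.
Proof.
have h12 : (0 : R) < 1 / 2 by rewrite divr_gt0.
have := (@Bto0 R x L hbnd); move/cvgrPdist_le => /(_ _ h12).
apply: filterS => t; rewrite sub0r normrN => h; exact: le_trans (ler_norm _) h.
Qed.

Lemma PC N : (1 <= N)%N -> cvgn (fun n => P N n).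
Proof.
have [N0 _ hN0] := Bev.
suff H : forall d N, (1 <= N)%N -> (N0 <= N + d)%N -> cvgn (fun n => P N n).
  by move=> hN; apply: (H N0 N hN); rewrite leq_addl.
elim => [|d IH] {}N hN hd.
  by rewrite addn0 in hd; exact: (Pgeo N hN (hN0 N hd)).1.
have c1 := IH N.+1 isT (ltac:(lia)).
have c2 := IH N.+2 isT (ltac:(lia)).
by apply/cvg_ex; eexists; exact: Plim N hN c1 c2.
Qed.

Lemma Frec N : (1 <= N)%N -> frakF x N = frakF x N.+1 - a N * frakF x N.+2.
Proof.
move=> hN.
have := Plim N hN (PC N.+1 isT) (PC N.+2 isT).
rewrite /frakF => /(cvg_lim _) ->.
  ring.
exact: norm_hausdorff.
Qed.

Lemma Fto1 : (fun N => frakF x N) @ \oo --> (1 : R[i]).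
Proof.
apply: (dom _ _ (fun N => 2 * BB N)).
  rewrite -(mulr0 2); apply: cvgM; first exact: cvg_cst.
  exact: (@Bto0 R x L hbnd).
have := Bev; apply: filterS2 (nbhs_infty_ge 1) => N hN hB.
rewrite /frakF addrAC subrr add0r.
exact: (Pgeo N hN hB).2.
Qed.

End H7.

Section H8.
Context {R : realType}.
Local Notation nc := (@ComplexField.Normc.normc R).
Variable x : nat -> R[i].
Local Notation a k := (x k * x k.+1).
Local Notation bb k := (nc (x k * x k.+1)).
Variable L : R.
Hypothesis hbnd : forall n, \sum_(1 <= k < n) bb k <= L.
Local Notation BB := (B x).

Lemma uniq0 (H : nat -> R[i]) :
  (forall n, (1 <= n)%N -> H n - H n.+1 + a n * H n.+2 = 0) ->
  H @ \oo --> (0 : R[i]) -> forall n, (1 <= n)%N -> H n = 0.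
Proof.
move=> hrec h0.
have [N1 _ hN1] := @Bev R x L hbnd.
have [N3 _ hN3] : \forall k \near \oo, nc (H k) <= 1.
  have h1 : (0 : R[i]) < 1 by [].
  move/cvgrPdist_le : h0 => /(_ _ h1); apply: filterS => k.
  by rewrite sub0r normrN normE lecR.
set N2 := maxn (maxn N1 N3) 1.
have hN2 n : (N2 <= n)%N -> [/\ (N1 <= n)%N, (N3 <= n)%N & (1 <= n)%N].
  by rewrite /N2 !geq_max => /andP[/andP[-> ->] ->].
have tel n M : (1 <= n)%N -> (n <= M)%N ->
    H n = H M - \sum_(n <= k < M) a k * H k.+2.
  move=> hn nM; rewrite -(subnK nM); elim: (M - n)%N => [|d IH].
    by rewrite add0n big_geq // subr0.
  rewrite addSn big_nat_recr /=; last by rewrite leq_addl.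
  have e := hrec (d + n)%N (leq_trans hn (leq_addl _ _)).
  rewrite IH -[LHS]subr0 -e; ring.
have bound c : 0 <= c -> (forall k, (N2 <= k)%N -> nc (H k) <= c) ->
    forall n, (N2 <= n)%N -> nc (H n) <= c / 2.
  move=> c0 hc n hn; have [hn1 hn3 hn0] := hN2 n hn.
  apply/ler_addgt0Pr => e e0.
  have [M0 _ hM0] : \forall M \near \oo, nc (H M) < e.
    have e0' : (0 : R[i]) < e%:C%C by rewrite ltcR.
    move/cvgrPdist_lt : h0 => /(_ _ e0'); apply: filterS => k.
    by rewrite sub0r normrN normE ltcR.
  set M := maxn M0 n.
  have hM : (n <= M)%N by rewrite leq_maxr.
  rewrite (tel n M hn0 hM).
  apply: le_trans (nc_D _ _) _.
  rewrite (normcN (\sum_(n <= k < M) _)) addrC lerD //; last first.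
    by apply/ltW/hM0; exact: leq_maxl.
  apply: le_trans (nc_sum _ _ _) _.
  have Hs : \sum_(n <= k < M) nc (a k * H k.+2) <= \sum_(n <= k < M) bb k * c.
    apply: ler_sum_nat => k /andP[hk _].
    rewrite ComplexField.Normc.normcM ler_wpM2l ?nc_ge0 //.
    apply: hc; apply: leq_trans hn _; lia.
  apply: le_trans Hs _.
  rewrite -big_distrl /= mulrC ler_wpM2l //.
  apply: le_trans (@Ble R x L hbnd n M hn0) _.
  by have := hN1 n hn1; rewrite div1r.
have iter j : forall n, (N2 <= n)%N -> nc (H n) <= (1 / 2) ^+ j.
  elim: j => [|j IH] n hn.
    by rewrite expr0; have [_ hn3 _] := hN2 n hn; exact: hN3.
  have h12 : (0 : R) <= 1 / 2 by rewrite divr_ge0.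
  apply: le_trans (bound _ (exprn_ge0 _ h12) IH n hn) _.
  by rewrite exprSr !mul1r.
have Hz n : (N2 <= n)%N -> H n = 0.
  move=> hn; apply: ComplexField.Normc.eq0_normc; apply/le_anti; rewrite nc_ge0 andbT.
  have hg : (fun j => (1 / 2 : R) ^+ j) @ \oo --> (0 : R).
    by apply: cvg_expr; rewrite ger0_norm // ?ltr_pdivrMr // mul1r ltr1n.
  apply: (@cvgr_to_ge _ \oo _ _ _ _ _ hg).
  by apply: nearW => j; exact: iter.
suff K : forall d n, (1 <= n)%N -> (N2 <= n + d)%N -> H n = 0.
  by move=> n hn; apply: (K N2 n hn); rewrite leq_addl.
elim => [|d IH] n hn hd; first by rewrite addn0 in hd; exact: Hz.
have := hrec n hn.
rewrite (IH n.+1 isT (ltac:(lia))) (IH n.+2 isT (ltac:(lia))) mulr0 addr0 subr0 => //.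
Qed.

End H8.


Theorem mainTheorem2 (R : realType) (x : nat -> R[i])
  (hx0 : forall n : nat, (1 <= n)%N -> x n != 0)
  (hsum : (\sum_(1 <= k <oo) (ComplexField.Normc.normc (x k * x k.+1))%:E < +oo)%E) :
  let F := fun n : nat => frakF x n in
  [/\ (forall n : nat, (1 <= n)%N -> F n - F n.+1 + x n * x n.+1 * F n.+2 = 0),
      F @ \oo --> (1 : R[i])
    & forall G : nat -> R[i],
        (forall n : nat, (1 <= n)%N -> G n - G n.+1 + x n * x n.+1 * G n.+2 = 0) ->
        G @ \oo --> (1 : R[i]) ->
        forall n : nat, (1 <= n)%N -> G n = F n].
Proof.
move=> F.
set E := (\sum_(1 <= k <oo) _)%E in hsum.
have E0 : (0 <= E)%E.
  by apply: nneseries_ge0 => n _ _; rewrite lee_fin nc_ge0.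
have hbnd : forall n, \sum_(1 <= k < n) ComplexField.Normc.normc (x k * x k.+1) <= fine E.
  move=> n; rewrite -lee_fin fineK ?ge0_fin_numE // -sumEFin.
  by apply: nneseries_lim_ge => k _ _; rewrite lee_fin nc_ge0.
have Frec' n : (1 <= n)%N -> F n - F n.+1 + x n * x n.+1 * F n.+2 = 0.
  move=> hn; rewrite /F /= (@Frec R x (fine E) hbnd n hn).
  by rewrite [X in X + _]addrAC subrr add0r addNr.
have F1 : F @ \oo --> (1 : R[i]) by exact: (@Fto1 R x (fine E) hbnd).
clearbody F.
split => // G hG G1 n hn.
have hrec : forall k, (1 <= k)%N ->
    (G k - F k) - (G k.+1 - F k.+1) + x k * x k.+1 * (G k.+2 - F k.+2) = 0.
  move=> k hk; have e1 := hG k hk; have e2 := Frec' k hk.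
  transitivity ((G k - G k.+1 + x k * x k.+1 * G k.+2) - (F k - F k.+1 + x k * x k.+1 * F k.+2)).
    ring.
  by rewrite e1 e2 subrr.
have hto : (fun k => G k - F k) @ \oo --> (0 : R[i]).
  rewrite -(subrr (1 : R[i])).
  exact: cvgB G1 F1.
have := @uniq0 R x (fine E) hbnd (fun k => G k - F k) hrec hto n hn.
by move/eqP; rewrite subr_eq0 => /eqP.
Qed.
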